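(* Consider a cathode solution $(\phi_{\mathrm{el}},\phi_{\mathrm{ion}},C)$ with active-layer boundary $h_b\in(h_1,h_2)$ in the classical formulation, i.e. with $\eta=s=\phi_{\mathrm{ion}}-\phi_{\mathrm{el}}-\frac{RT}{4F}\ln\frac{C^{\mathrm{bulk}}}{C}$, and assume $j_{\mathrm{cell}}>0$. Then there exists $\varepsilon>0$ such that $\eta(y)<0$ for all $y\in(h_b-\varepsilon,h_b)$. Consequently the charge-transfer current $i(y)$ is negative on $(h_b-\varepsilon,h_b)$.
   Context: Cathode model (isothermal, 1D). Fix real numbers $0<h_1<h_b<h_2$ and positive constants $\sigma_{\mathrm{el}},\sigma_{\mathrm{ion}}$ (effective electronic/ionic conductivities), $\rho_a$ (air density), $D_2$ (effective diffusion coefficient), $M$ (molar mass of $O_2$), $F$ (Faraday constant), $R$ (gas constant), $T$ (temperature), $A$ (reaction surface area per volume). Also fix $j_{\mathrm{cell}}>0$, $V_2\in\mathbb R$ and $C^{\mathrm{bulk}}\in(0,1)$. Charge-transfer current. For $y\in(h_1,h_b)$ set $$i(y)=A\,K\,\Big(\frac{\rho_a R T\,C(y)}{M}\Big)^{0.2}\Big[\exp\Big(\frac{1.2F\eta(y)}{RT}\Big)-\exp\Big(-\frac{F\eta(y)}{RT}\Big)\Big],\qquad K=1.47\cdot10^{6}\,e^{-85859/(RT)}.$$ Define the signed quantity $$s(y)=\phi_{\mathrm{ion}}(y)-\phi_{\mathrm{el}}(y)-\frac{RT}{4F}\ln\frac{C^{\mathrm{bulk}}}{C(y)}.$$ The activation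 overpotential is $\eta=s$ in the classical formulation and $\eta=|s|$ in the modified formulation. A cathode solution with active-layer boundary $h_b$ is a triple $\phi_{\mathrm{el}},\phi_{\mathrm{ion}},C\in C^1([h_1,h_2])$ with the following properties. - Regularity: each function is $C^2$ on $[h_1,h_b]$ and on $[h_b,h_2]$, and $C>0$. - Equations on $(h_1,h_b)$: $(\sigma_{\mathrm{el}}\phi_{\mathrm{el}}')'=-i$, $(\sigma_{\mathrm{ion}}\phi_{\mathrm{ion}}')'=i$ and $(\rho_aD_2C')'=\frac{M}{4F}i$. - Equations on $(h_b,h_2)$: all three left-hand sides vanish. - Boundary conditions: $-\sigma_{\mathrm{el}}\phi_{\mathrm{el}}'(h_2)=j_{\mathrm{cell}}$, $\phi_{\mathrm{ion}}'(h_2)=0$, $\phi_{\mathrm{el}}(h_2)=V_2$, $C(h_2)=C^{\mathrm{bulk}}$, $\phi_{\mathrm{el}}'(h_1)=0$, $-\sigma_{\mathrm{ion}}\phi_{\mathrm{ion}}'(h_1)=j_{\mathrm{cell}}$, $C'(h_1)=0$. - Interface condition: $s(h_b)=0$, i.e. $\eta(h_b)=0$. *)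

(* Defs.v *)
From Stdlib Require Import Reals Lra.
Open Scope R_scope.

Definition has_deriv_on (f f' : R -> R) (a b : R) : Prop :=
  forall x, a <= x <= b ->
    limit1_in (fun h => (f (x + h) - f x) / h)
              (fun h => h <> 0 /\ a <= x + h <= b) (f' x) 0.

Definition cont_on (f : R -> R) (a b : R) : Prop :=
  forall x, a <= x <= b -> limit1_in f (fun y => a <= y <= b) (f x) x.

Definition piecewise_C2 (f df d2l d2r : R -> R) (h1 hb h2 : R) : Prop :=
  has_deriv_on f df h1 h2 /\ cont_on df h1 h2 /\
  has_deriv_on df d2l h1 hb /\ cont_on d2l h1 hb /\
  has_deriv_on df d2r hb h2 /\ cont_on d2r hb h2.

Definition Kconst (Rg T : R) : R := 1470000 * exp (- 85859 / (Rg * T)).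

Definition s_fun (Rg T F Cbulk : R) (phi_el phi_ion C : R -> R) (y : R) : R :=
  phi_ion y - phi_el y - (Rg * T) / (4 * F) * ln (Cbulk / C y).

Definition i_ct (A Rg T F M rho_a : R) (C eta : R -> R) (y : R) : R :=
  A * Kconst Rg T * Rpower (rho_a * Rg * T * C y / M) (1 / 5) *
  (exp (6 / 5 * F * eta y / (Rg * T)) - exp (- (F * eta y / (Rg * T)))).

(* Main.v *)
Require Import Defs.
From Stdlib Require Import Reals Lra.
Open Scope R_scope.

Lemma hd_interior f f' a b x : has_deriv_on f f' a b -> a < x < b ->
  derivable_pt_lim f x (f' x).
Proof.
  intros H Hx eps Heps.
  destruct (H x (conj (Rlt_le _ _ (proj1 Hx)) (Rlt_le _ _ (proj2 Hx))) eps Heps)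
    as [alp [Halp Hl]].
  simpl in Hl. unfold R_dist in Hl.
  assert (Hd: 0 < Rmin alp (Rmin (x-a) (b-x))).
  { apply Rmin_pos; [lra| apply Rmin_pos; lra]. }
  exists (mkposreal _ Hd). intros h Hh0 Hh. simpl in Hh.
  pose proof (Rmin_l alp (Rmin (x-a) (b-x))).
  pose proof (Rmin_r alp (Rmin (x-a) (b-x))).
  pose proof (Rmin_l (x-a) (b-x)). pose proof (Rmin_r (x-a) (b-x)).
  apply Rabs_def2 in Hh.
  apply Hl. split. split; [auto | lra].
  replace (h - 0) with h by ring. apply Rabs_def1; lra.
Qed.

Lemma cont_restr f a b c d : cont_on f a b -> a <= c -> d <= b -> cont_on f c d.
Proof.
  intros H Hc Hd x Hx eps He.
  destruct (H x ltac:(lra) eps He) as [alp [Ha Hl]].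
  exists alp; split; auto. intros y [Hy Hy2]. apply Hl. split; [lra|auto].
Qed.

Lemma cont_comb f g c1 c2 a b : cont_on f a b -> cont_on g a b ->
  cont_on (fun x => c1 * f x + c2 * g x) a b.
Proof.
  intros Hf Hg x Hx.
  apply limit_plus; apply limit_mul; try apply (limit_free (fun _ => _) _ 0 x);
  [apply Hf|apply Hg]; auto.
Qed.

Lemma const_lemma g a b : a < b -> cont_on g a b ->
  (forall x, a < x < b -> derivable_pt_lim g x 0) -> g a = g b.
Proof.
  intros Hab Hc Hd.
  assert (Hin: forall x y, a < x -> x < y -> y < b -> g x = g y).
  { intros x y H1 H2 H3.
    destruct (MVT_cor2 g (fun _ => 0) x y H2) as [c [Hc1 Hc2]].
    - intros c Hc'. apply Hd. lra.
    - lra. }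
  destruct (Req_dec (g a) (g b)) as [E|NE]; auto. exfalso.
  set (e := Rabs (g a - g b) / 3).
  assert (He : e > 0).
  { unfold e. assert (0 < Rabs (g a - g b)) by (apply Rabs_pos_lt; lra). lra. }
  assert (NE' : g a - g b <> 0) by lra.
  destruct (Hc a ltac:(lra) e He) as [d1 [Hd1 H1]].
  destruct (Hc b ltac:(lra) e He) as [d2 [Hd2 H2]].
  simpl in H1, H2. unfold R_dist in H1, H2.
  set (x := a + Rmin d1 ((b-a)/3) / 2).
  set (y := b - Rmin d2 ((b-a)/3) / 2).
  pose proof (Rmin_l d1 ((b-a)/3)). pose proof (Rmin_r d1 ((b-a)/3)).
  pose proof (Rmin_l d2 ((b-a)/3)). pose proof (Rmin_r d2 ((b-a)/3)).
  assert (0 < Rmin d1 ((b-a)/3)) by (apply Rmin_pos; lra).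
  assert (0 < Rmin d2 ((b-a)/3)) by (apply Rmin_pos; lra).
  assert (Gxy : g x = g y) by (apply Hin; unfold x, y; lra).
  assert (A1 : Rabs (g x - g a) < e).
  { apply H1. unfold x. split; [lra|]. apply Rabs_def1; lra. }
  assert (A2 : Rabs (g y - g b) < e).
  { apply H2. unfold y. split; [lra|]. apply Rabs_def1; lra. }
  apply Rabs_def2 in A1. apply Rabs_def2 in A2.
  unfold e in *. rewrite Gxy in *.
  destruct (Rcase_abs (g a - g b)) as [Hn|Hp].
  - rewrite Rabs_left in * by lra. lra.
  - rewrite Rabs_right in * by lra. lra.
Qed.

Lemma dpl_ext f g x l : (forall y, f y = g y) -> derivable_pt_lim f x l ->
  derivable_pt_lim g x l.
Proof.
  intros E H eps He. destruct (H eps He) as [d Hd]. exists d.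
  intros h H1 H2. rewrite <- !E. auto.
Qed.

Lemma dpl_comb f g c1 c2 x l1 l2 : derivable_pt_lim f x l1 ->
  derivable_pt_lim g x l2 ->
  derivable_pt_lim (fun y => c1 * f y + c2 * g y) x (c1 * l1 + c2 * l2).
Proof.
  intros H1 H2.
  exact (derivable_pt_lim_plus _ _ x _ _ (derivable_pt_lim_scal _ c1 x _ H1)
           (derivable_pt_lim_scal _ c2 x _ H2)).
Qed.

Lemma i_neg A Rg T F M rho_a C eta y : 0 < A -> 0 < Rg -> 0 < T -> 0 < F ->
  eta y < 0 -> i_ct A Rg T F M rho_a C eta y < 0.
Proof.
  intros HA HR HT HF He. unfold i_ct, Kconst, Rpower.
  assert (P : 0 < A * (1470000 * exp (- 85859 / (Rg * T))) *
     exp (1 / 5 * ln (rho_a * Rg * T * C y / M))).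
  { pose proof (exp_pos (- 85859 / (Rg * T))).
    pose proof (exp_pos (1 / 5 * ln (rho_a * Rg * T * C y / M))). 
    repeat apply Rmult_lt_0_compat; lra. }
  assert (u : F * eta y / (Rg * T) < 0).
  { unfold Rdiv. assert (0 < / (Rg * T)) by (apply Rinv_0_lt_compat; nra). assert (F * eta y < 0) by nra. nra. }
  assert (exp (6 / 5 * F * eta y / (Rg * T)) < exp (- (F * eta y / (Rg * T)))).
  { apply exp_increasing. replace (6 / 5 * F * eta y / (Rg * T)) with
      (6/5 * (F * eta y / (Rg * T))) by (field; nra). lra. }
  nra.
Qed.

Theorem mainTheorem2
  (h1 hb h2 sigma_el sigma_ion rho_a D2 M F Rg T A j_cell V2 Cbulk : R)
  (phi_el phi_ion C : R -> R)
  (dphi_el d2l_el d2r_el dphi_ion d2l_ion d2r_ion dC d2l_C d2r_C : R -> R) :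
  0 < h1 -> h1 < hb -> hb < h2 ->
  0 < sigma_el -> 0 < sigma_ion -> 0 < rho_a -> 0 < D2 -> 0 < M ->
  0 < F -> 0 < Rg -> 0 < T -> 0 < A ->
  0 < j_cell -> 0 < Cbulk -> Cbulk < 1 ->
  (* regularity *)
  piecewise_C2 phi_el dphi_el d2l_el d2r_el h1 hb h2 ->
  piecewise_C2 phi_ion dphi_ion d2l_ion d2r_ion h1 hb h2 ->
  piecewise_C2 C dC d2l_C d2r_C h1 hb h2 ->
  (forall y, h1 <= y <= h2 -> 0 < C y) ->
  (* equations on (h1,hb), classical formulation eta = s *)
  (forall y, h1 < y < hb ->
     sigma_el * d2l_el y =
       - i_ct A Rg T F M rho_a C (s_fun Rg T F Cbulk phi_el phi_ion C) y) ->
  (forall y, h1 < y < hb ->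
     sigma_ion * d2l_ion y =
       i_ct A Rg T F M rho_a C (s_fun Rg T F Cbulk phi_el phi_ion C) y) ->
  (forall y, h1 < y < hb ->
     rho_a * D2 * d2l_C y =
       M / (4 * F) * i_ct A Rg T F M rho_a C (s_fun Rg T F Cbulk phi_el phi_ion C) y) ->
  (* equations on (hb,h2) *)
  (forall y, hb < y < h2 -> sigma_el * d2r_el y = 0) ->
  (forall y, hb < y < h2 -> sigma_ion * d2r_ion y = 0) ->
  (forall y, hb < y < h2 -> rho_a * D2 * d2r_C y = 0) ->
  (* boundary conditions *)
  - sigma_el * dphi_el h2 = j_cell ->
  dphi_ion h2 = 0 ->
  phi_el h2 = V2 ->
  C h2 = Cbulk ->
  dphi_el h1 = 0 ->
  - sigma_ion * dphi_ion h1 = j_cell ->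
  dC h1 = 0 ->
  (* interface condition *)
  s_fun Rg T F Cbulk phi_el phi_ion C hb = 0 ->
  exists eps, 0 < eps /\ eps <= hb - h1 /\
    forall y, hb - eps < y < hb ->
      s_fun Rg T F Cbulk phi_el phi_ion C y < 0 /\
      i_ct A Rg T F M rho_a C (s_fun Rg T F Cbulk phi_el phi_ion C) y < 0.
Proof.
  intros Hh1 Hh1b Hhb2 Hsel Hsion Hrho HD2 HM HF HRg HT HA Hj HCb HCb1
    [Pel1 [Pel2 [Pel3 [Pel4 [Pel5 Pel6]]]]]
    [Pi1 [Pi2 [Pi3 [Pi4 [Pi5 Pi6]]]]]
    [PC1 [PC2 [PC3 [PC4 [PC5 PC6]]]]] HCpos
    Eel Eion EC Rel Rion RC B1 B2 B3 B4 B5 B6 B7 Hs.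
  (* dphi_ion constant on [hb,h2] *)
  assert (Dion : dphi_ion hb = 0).
  { rewrite <- B2. apply const_lemma; [lra| |].
    - apply (cont_restr _ h1 h2); try assumption; lra.
    - intros x Hx. pose proof (hd_interior _ _ _ _ x Pi5 Hx) as D.
      assert (d2r_ion x = 0).
      { pose proof (Rion x Hx). apply Rmult_integral in H. destruct H; lra. }
      rewrite H in D. exact D. }
  assert (G1 : sigma_el * dphi_el h1 + sigma_ion * dphi_ion h1
             = sigma_el * dphi_el hb + sigma_ion * dphi_ion hb).
  { apply (const_lemma (fun x => sigma_el * dphi_el x + sigma_ion * dphi_ion x)); auto.
    - apply cont_comb; apply (cont_restr _ h1 h2); try assumption; lra.
    - intros x Hx.
      pose proof (dpl_comb _ _ sigma_el sigma_ion x _ _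
        (hd_interior _ _ _ _ x Pel3 Hx) (hd_interior _ _ _ _ x Pi3 Hx)) as D.
      rewrite (Eel x Hx), (Eion x Hx) in D.
      replace (- i_ct A Rg T F M rho_a C (s_fun Rg T F Cbulk phi_el phi_ion C) x +
       i_ct A Rg T F M rho_a C (s_fun Rg T F Cbulk phi_el phi_ion C) x) with 0 in D by ring.
      exact D. }
  assert (G2 : rho_a * D2 * dC h1 + (- (M / (4 * F))) * (sigma_ion * dphi_ion h1)
             = rho_a * D2 * dC hb + (- (M / (4 * F))) * (sigma_ion * dphi_ion hb)).
  { apply (const_lemma (fun x => rho_a * D2 * dC x + (- (M / (4 * F))) * (sigma_ion * dphi_ion x))); auto.
    - apply (cont_comb dC (fun x => sigma_ion * dphi_ion x)).
      + apply (cont_restr _ h1 h2); try assumption; lra.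
      + intros x Hx. apply limit_mul. apply (limit_free (fun _ => _) _ 0 x).
        apply (cont_restr _ h1 h2 h1 hb); try assumption; lra.
    - intros x Hx.
      pose proof (dpl_comb _ _ (rho_a * D2) (- (M / (4 * F))) x _ _
        (hd_interior _ _ _ _ x PC3 Hx)
        (derivable_pt_lim_scal _ sigma_ion x _ (hd_interior _ _ _ _ x Pi3 Hx))) as D.
      rewrite (EC x Hx) in D.
      rewrite (Eion x Hx) in D.
      replace (M / (4 * F) * i_ct A Rg T F M rho_a C (s_fun Rg T F Cbulk phi_el phi_ion C) x +
        - (M / (4 * F)) * i_ct A Rg T F M rho_a C (s_fun Rg T F Cbulk phi_el phi_ion C) x)
        with 0 in D by ring.
      exact D. }
  rewrite Dion, B5, B7 in *.
  assert (Del : dphi_el hb = - j_cell / sigma_el).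
  { assert (E : sigma_el * dphi_el hb = - j_cell) by lra.
    rewrite <- E. field. lra. }
  assert (DCb : dC hb = M * j_cell / (4 * F * rho_a * D2)).
  { replace (sigma_ion * dphi_ion h1) with (- j_cell) in G2 by lra.
    assert (E : rho_a * D2 * dC hb = M / (4 * F) * j_cell) by nra.
    replace (dC hb) with (rho_a * D2 * dC hb / (rho_a * D2)) by (field; lra).
    rewrite E. field. lra. }
  assert (Hhb : h1 < hb < h2) by lra.
  assert (HChb : 0 < C hb) by (apply HCpos; lra).
  set (k := Rg * T / (4 * F)).
  assert (Hk : 0 < k) by (unfold k; apply Rdiv_lt_0_compat; nra).
  pose proof (hd_interior _ _ _ _ hb Pel1 Hhb) as Dphel.
  pose proof (hd_interior _ _ _ _ hb Pi1 Hhb) as Dphion.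
  pose proof (hd_interior _ _ _ _ hb PC1 Hhb) as DCC.
  assert (Dq := derivable_pt_lim_div (fct_cte Cbulk) C hb 0 (dC hb)
                 (derivable_pt_lim_const Cbulk hb) DCC ltac:(lra)).
  assert (Hq : 0 < (fct_cte Cbulk / C)%F hb).
  { unfold fct_cte, div_fct. apply Rdiv_lt_0_compat; lra. }
  assert (Dl := derivable_pt_lim_comp _ _ hb _ _ Dq (derivable_pt_lim_ln _ Hq)).
  assert (Ds := dpl_comb _ _ 1 (- k) hb _ _ (derivable_pt_lim_minus _ _ hb _ _ Dphion Dphel) Dl).
  rewrite Dion in Ds.
  set (s' := 1 * (0 - dphi_el hb) +
        - k * (/ (fct_cte Cbulk / C)%F hb *
               ((0 * C hb - dC hb * fct_cte Cbulk hb) / (C hb)²))) in Ds.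
  assert (Es : s' = j_cell / sigma_el + k * dC hb / C hb).
  { unfold s', fct_cte, div_fct, Rsqr. rewrite Del. field. lra. }
  assert (HdC : 0 < dC hb).
  { rewrite DCb. apply Rdiv_lt_0_compat. nra. repeat apply Rmult_lt_0_compat; lra. }
  assert (Hs' : 0 < s').
  { rewrite Es. assert (0 < j_cell / sigma_el) by (apply Rdiv_lt_0_compat; lra).
    assert (0 < k * dC hb / C hb) by (apply Rdiv_lt_0_compat; nra). lra. }
  assert (Es2 : forall y, s_fun Rg T F Cbulk phi_el phi_ion C y =
     1 * (phi_ion - phi_el)%F y + - k * comp ln (fct_cte Cbulk / C)%F y).
  { intros y. unfold s_fun, k, comp, fct_cte, div_fct, minus_fct. ring. }
  assert (Ds2 : derivable_pt_lim (s_fun Rg T F Cbulk phi_el phi_ion C) hb s').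
  { eapply dpl_ext; [|exact Ds]. intros y. cbv beta. symmetry. apply Es2. }
  destruct (Ds2 s' Hs') as [d Hd].
  exists (Rmin d (hb - h1)).
  pose proof (Rmin_l d (hb - h1)). pose proof (Rmin_r d (hb - h1)).
  assert (0 < Rmin d (hb - h1)) by (apply Rmin_pos; [apply cond_pos|lra]).
  split; [lra|split; [lra|]].
  intros y Hy.
  assert (Sy : s_fun Rg T F Cbulk phi_el phi_ion C y < 0).
  { assert (Hh : y - hb <> 0) by lra.
    assert (Hh2 : Rabs (y - hb) < d) by (apply Rabs_def1; lra).
    pose proof (Hd (y - hb) Hh Hh2) as Q.
    replace (hb + (y - hb)) with y in Q by ring.
    rewrite Hs in Q. apply Rabs_def2 in Q. destruct Q as [_ Q].
    assert (Pos : 0 < (s_fun Rg T F Cbulk phi_el phi_ion C y - 0) / (y - hb)) by lra.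
    destruct (Rlt_or_le (s_fun Rg T F Cbulk phi_el phi_ion C y) 0) as [L|L]; auto.
    exfalso. assert (Iv : 0 < /(hb - y)) by (apply Rinv_0_lt_compat; lra).
    replace ((s_fun Rg T F Cbulk phi_el phi_ion C y - 0) / (y - hb))
      with (- (s_fun Rg T F Cbulk phi_el phi_ion C y * / (hb - y))) in Pos
      by (field; lra).
    nra. }
  split; auto.
  apply i_neg; auto.
Qed.
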